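(* For every Tychonoff space $X$, the following are equivalent: (1) $C_p(X)\models S_{fin}(\Gamma_f,\Gamma_f)$ for every $f\in C_p(X)$; (2) $X\models S_{fin}(\Gamma_F,\Gamma)$; (3) $X\models S_{fin}(\Gamma_{cl},\Gamma_{cl})$ and $X$ is strongly zero-dimensional; (4) $X\models S_1(\Gamma_F,\Gamma)$.
   Context: All spaces are Tychonoff; $C_p(X)$ is $C(X)$ with pointwise convergence topology. For $y$ in a space $Y$: $\Gamma_y=\{A\subseteq Y: A$ infinite, $y\notin A$, every neighbourhood of $y$ contains all but finitely many points of $A\}$. Zero-set: $g^{-1}(0)$, $g\in C(X)$; cozero-set: its complement. A cover $\mathcal U$ of $X$ always means $X=\bigcup\mathcal U$, $X\notin\mathcal U$; $\gamma$-cover: infinite, each point in all but finitely many members. $\Gamma$: open $\gamma$-covers; $\Gamma_{cl}$: clopen $\gamma$-covers. $\Gamma_F$: $\gamma$-covers $\mathcal U$ of $X$ by cozero-sets for which there are zero-sets $F(U)\subseteq U$ ($U\in\mathcal U$) with $\{F(U):U\in\mathcal U\}$ a $\gamma$-cover of $X$. $S_1(\mathcal A,\mathcal B)$: for every sequence $(A_n)$ from $\mathcal A$ there are $b_n\in A_n$ with $\{b_n\}\in\mathcal B$; $S_{fin}(\mathcal A,\mathcal B)$: there are finite $B_n\subseteq A_n$ with $\bigcup_nB_n\in\mathcal B$. *)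

(* Defs.v *)
From Stdlib Require Import Reals Lra List Classical.
Open Scope R_scope.
Set Implicit Arguments.
Unset Strict Implicit.

Record Topology (X : Type) := mkTop {
  is_open : (X -> Prop) -> Prop;
  open_all : is_open (fun _ => True);
  open_inter : forall U V, is_open U -> is_open V -> is_open (fun x => U x /\ V x);
  open_union : forall F : (X -> Prop) -> Prop,
      (forall U, F U -> is_open U) -> is_open (fun x => exists U, F U /\ U x)
}.
Arguments is_open {X} t U.

Definition is_closed {X} (T : Topology X) (A : X -> Prop) : Prop :=
  is_open T (fun x => ~ A x).
Definition is_clopen {X} (T : Topology X) (A : X -> Prop) : Prop :=
  is_open T A /\ is_closed T A.

Definition R_open (O : R -> Prop) : Prop :=
  forall r, O r -> exists eps, eps > 0 /\ forall s, Rabs (s - r) < eps -> O s.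

Definition continuous {X} (T : Topology X) (f : X -> R) : Prop :=
  forall O, R_open O -> is_open T (fun x => O (f x)).

Definition T1 {X} (T : Topology X) : Prop :=
  forall x y : X, x <> y -> exists U, is_open T U /\ U y /\ ~ U x.
Definition completely_regular {X} (T : Topology X) : Prop :=
  forall (F : X -> Prop) (x : X), is_closed T F -> ~ F x ->
    exists f : X -> R, continuous T f /\ (forall y, 0 <= f y <= 1) /\
      f x = 0 /\ (forall y, F y -> f y = 1).
Definition Tychonoff {X} (T : Topology X) : Prop := T1 T /\ completely_regular T.

Definition zero_set {X} (T : Topology X) (Z : X -> Prop) : Prop :=
  exists g, continuous T g /\ forall x, Z x <-> g x = 0.
Definition cozero_set {X} (T : Topology X) (U : X -> Prop) : Prop :=
  exists g, continuous T g /\ forall x, U x <-> g x <> 0.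

(** Strong zero-dimensionality (Engelking 6.2.4): any two disjoint zero-sets
    (equivalently, completely separated sets) are separated by a clopen set. *)
Definition strongly_zero_dim {X} (T : Topology X) : Prop :=
  forall Z1 Z2, zero_set T Z1 -> zero_set T Z2 -> (forall x, ~ (Z1 x /\ Z2 x)) ->
    exists C, is_clopen T C /\ (forall x, Z1 x -> C x) /\ (forall x, Z2 x -> ~ C x).

Definition infinite {E : Type} (A : E -> Prop) : Prop :=
  forall l : list E, exists e, A e /\ ~ In e l.

Definition almost_all_in {E : Type} (A : E -> Prop) (U : E -> Prop) : Prop :=
  exists l : list E, forall a, A a -> ~ In a l -> U a.

(** Gamma_y: nontrivial sequences converging to y. *)
Definition Gamma_pt {Y} (T : Topology Y) (y : Y) (A : Y -> Prop) : Prop :=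
  infinite A /\ ~ A y /\
  forall U, is_open T U -> U y -> almost_all_in A U.

Definition family (X : Type) := (X -> Prop) -> Prop.

Definition is_cover {X} (C : family X) : Prop :=
  (forall x, exists U, C U /\ U x) /\ (forall U, C U -> exists x, ~ U x).

Definition gamma_cover {X} (C : family X) : Prop :=
  is_cover C /\ infinite C /\
  forall x : X, almost_all_in C (fun U => U x).

Definition GammaO {X} (T : Topology X) (C : family X) : Prop :=
  gamma_cover C /\ forall U, C U -> is_open T U.

Definition GammaCl {X} (T : Topology X) (C : family X) : Prop :=
  gamma_cover C /\ forall U, C U -> is_clopen T U.

Definition GammaF {X} (T : Topology X) (C : family X) : Prop :=
  gamma_cover C /\ (forall U, C U -> cozero_set T U) /\
  exists F : (X -> Prop) -> (X -> Prop),
    (forall U, C U -> zero_set T (F U) /\ forall x, F U x -> U x) /\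
    gamma_cover (fun V => exists U, C U /\ V = F U).

Definition S1 {E : Type} (A B : (E -> Prop) -> Prop) : Prop :=
  forall s : nat -> (E -> Prop), (forall n, A (s n)) ->
    exists b : nat -> E, (forall n, s n (b n)) /\ B (fun e => exists n, b n = e).

Definition Sfin {E : Type} (A B : (E -> Prop) -> Prop) : Prop :=
  forall s : nat -> (E -> Prop), (forall n, A (s n)) ->
    exists b : nat -> list E, (forall n e, In e (b n) -> s n e) /\
      B (fun e => exists n, In e (b n)).

Unset Implicit Arguments.
Definition CX {X} (T : Topology X) := { f : X -> R | continuous T f }.

Definition Cp_open {X} (T : Topology X) (W : CX T -> Prop) : Prop :=
  forall g, W g -> exists (xs : list X) (eps : R), eps > 0 /\
    forall h : CX T, (forall x, In x xs -> Rabs (proj1_sig h x - proj1_sig g x) < eps) -> W h.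

Lemma Cp_open_all (X : Type) (T : Topology X) : Cp_open T (fun _ => True).
Proof. intros g _. exists nil, 1. split; [lra | auto]. Qed.

Lemma Cp_open_inter (X : Type) (T : Topology X) (U V : CX T -> Prop) :
  Cp_open T U -> Cp_open T V -> Cp_open T (fun x => U x /\ V x).
Proof.
  intros HU HV g [Ug Vg].
  destruct (HU g Ug) as [l1 [e1 [He1 H1]]].
  destruct (HV g Vg) as [l2 [e2 [He2 H2]]].
  exists (l1 ++ l2), (Rmin e1 e2). split.
  - apply Rmin_glb_lt; assumption.
  - intros h Hh. split.
    + apply H1. intros x Hx. eapply Rlt_le_trans.
      apply Hh, in_or_app; auto. apply Rmin_l.
    + apply H2. intros x Hx. eapply Rlt_le_trans.
      apply Hh, in_or_app; auto. apply Rmin_r.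
Qed.

Lemma Cp_open_union (X : Type) (T : Topology X) (F : (CX T -> Prop) -> Prop) :
  (forall U, F U -> Cp_open T U) -> Cp_open T (fun x => exists U, F U /\ U x).
Proof.
  intros HF g [U [FU Ug]].
  destruct (HF U FU g Ug) as [l [e [He H]]].
  exists l, e. split; auto. intros h Hh. exists U. auto.
Qed.

Definition Cp {X} (T : Topology X) : Topology (CX T) :=
  @mkTop (CX T) (Cp_open T) (@Cp_open_all X T) (@Cp_open_inter X T) (@Cp_open_union X T).

(* Main.v *)
Require Import Defs.
From Stdlib Require Import Reals List Lra Lia Classical ClassicalEpsilon
  FunctionalExtensionality PropExtensionality ProofIrrelevance ZArith Arith.
Open Scope R_scope.

Lemma set_ext {A : Type} (P Q : A -> Prop) : (forall x, P x <-> Q x) -> P = Q.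
Proof. intros H; apply functional_extensionality; intro x; apply propositional_extensionality; auto. Qed.

Section Fam.
Context {E : Type}.

Definition injective_seq (w : nat -> E) := forall i j, w i = w j -> i = j.

Lemma inj_avoid (w : nat -> E) : injective_seq w ->
  forall l : list E, exists K, forall k, (K <= k)%nat -> ~ In (w k) l.
Proof.
  intros Hw l; induction l as [|a l IH].
  - exists 0%nat; intros k _ H; inversion H.
  - destruct IH as [K HK].
    destruct (classic (exists k0, w k0 = a)) as [[k0 Hk0]|Hn].
    + exists (Nat.max K (S k0)); intros k Hk [H|H].
      * subst a. apply Hw in H. lia.
      * apply (HK k); [lia|auto].
    + exists K; intros k Hk [H|H]; [apply Hn; eauto | apply (HK k); auto].
Qed.

Lemma inj_seq (C : E -> Prop) : infinite C ->
  exists w : nat -> E, (forall k, C (w k)) /\ injective_seq w.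
Proof.
  intros Hinf.
  assert (G : forall l : list E, {e | C e /\ ~ In e l}).
  { intro l. apply constructive_indefinite_description. apply Hinf. }
  set (g := fun l => proj1_sig (G l)).
  assert (Hg : forall l, C (g l) /\ ~ In (g l) l) by (intro l; exact (proj2_sig (G l))).
  set (pre := fix pre (n : nat) : list E := match n with O => nil | S n => g (pre n) :: pre n end).
  exists (fun n => g (pre n)). split; [intro k; apply Hg|].
  assert (Hin : forall m n, (m < n)%nat -> In (g (pre m)) (pre n)).
  { intros m n; induction n as [|n IH]; intros Hmn; [lia|].
    simpl. destruct (Nat.eq_dec m n) as [->|Hne]; [left; reflexivity| right; apply IH; lia]. }
  intros i j Hij. destruct (Nat.lt_trichotomy i j) as [H|[H|H]]; auto.
  - exfalso. apply (proj2 (Hg (pre j))). rewrite <- Hij. apply Hin; auto.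
  - exfalso. apply (proj2 (Hg (pre i))). rewrite Hij. apply Hin; auto.
Qed.

Lemma inj_eventually (C : E -> Prop) (P : E -> Prop) (w : nat -> E) :
  almost_all_in C P -> (forall k, C (w k)) -> injective_seq w ->
  exists K, forall k, (K <= k)%nat -> P (w k).
Proof.
  intros [l Hl] HC Hw. destruct (inj_avoid _ Hw l) as [K HK].
  exists K; intros k Hk. apply Hl; auto.
Qed.

Lemma max_list_bound (l : list nat) : exists N, forall a, In a l -> (a <= N)%nat.
Proof.
  induction l as [|a l [N HN]]; [exists 0%nat; intros a []|].
  exists (Nat.max a N); intros b [->|Hb]; [lia|]; specialize (HN b Hb); lia.
Qed.

End Fam.

Lemma list_eventually {A : Type} (xs : list A) (P : A -> nat -> Prop) :
  (forall x, exists N, forall n, (N <= n)%nat -> P x n) ->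
  exists N, forall n, (N <= n)%nat -> forall x, In x xs -> P x n.
Proof.
  intros H; induction xs as [|a xs [N HN]]; [exists 0%nat; intros n _ x []|].
  destruct (H a) as [Na HNa]. exists (Nat.max Na N); intros n Hn x [<-|Hx].
  - apply HNa; lia.
  - apply HN; auto; lia.
Qed.

Section Cov.
Context {X : Type}.

Definition seqg (u : nat -> X -> Prop) := forall x, exists K, forall k, (K <= k)%nat -> u k x.

Lemma gamma_ext (C C' : ((X -> Prop) -> Prop)) : gamma_cover C -> (forall V, C V <-> C' V) -> gamma_cover C'.
Proof.
  intros [[Hc1 Hc2] [Hinf Hal]] Heq. split; [split|split].
  - intro x; destruct (Hc1 x) as [U [HU HUx]]; exists U; split; [apply Heq|]; auto.
  - intros U HU; apply Hc2, Heq; auto.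
  - intro l; destruct (Hinf l) as [e [He Hl]]; exists e; split; [apply Heq|]; auto.
  - intro x; destruct (Hal x) as [l Hl]; exists l; intros a Ha Hn; apply Hl; [apply Heq|]; auto.
Qed.

Lemma gamma_from (C : ((X -> Prop) -> Prop)) :
  (forall U, C U -> exists x, ~ U x) -> infinite C -> (forall x, almost_all_in C (fun U => U x)) ->
  gamma_cover C.
Proof.
  intros H1 H2 H3. split; [split|split]; auto.
  intro x. destruct (H3 x) as [l Hl]. destruct (H2 l) as [e [He Hn]]. exists e; split; auto.
  apply Hl; auto.
Qed.

Lemma seq_avoid (u : nat -> X -> Prop) : (forall k, exists x, ~ u k x) -> seqg u ->
  forall l : list (X -> Prop), exists K, forall k, (K <= k)%nat -> ~ In (u k) l.
Proof.
  intros Hne Hg l. induction l as [|V l [K HK]]; [exists 0%nat; intros k _ []|].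
  destruct (classic (exists y, ~ V y)) as [[y Hy]|Hn].
  - destruct (Hg y) as [Ky HKy]. exists (Nat.max K Ky); intros k Hk [H|H].
    + apply Hy; rewrite H; apply HKy; lia.
    + apply (HK k); auto; lia.
  - exists K; intros k Hk [H|H].
    + destruct (Hne k) as [x Hx]; apply Hn; exists x; rewrite H; auto.
    + apply (HK k); auto.
Qed.

Lemma range_gamma (u : nat -> X -> Prop) (L : list (X -> Prop)) :
  (forall k, exists x, ~ u k x) -> seqg u ->
  gamma_cover (fun V => exists k, u k = V /\ ~ In V L).
Proof.
  intros Hne Hg. apply gamma_from.
  - intros U [k [<- _]]; auto.
  - intro l. destruct (seq_avoid _ Hne Hg (L ++ l)) as [K HK].
    exists (u K). split.
    + exists K; split; auto. intro H; apply (HK K); auto; apply in_or_app; auto.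
    + intro H; apply (HK K); auto; apply in_or_app; auto.
  - intro x. destruct (Hg x) as [K HK]. exists (map u (seq 0 K)).
    intros V [k [<- _]] Hn. apply HK. destruct (Nat.lt_ge_cases k K) as [Hk|Hk]; auto.
    exfalso; apply Hn. apply in_map. apply in_seq. lia.
Qed.

Lemma seq_gamma (b : nat -> X -> Prop) :
  (forall n, exists x, ~ b n x) -> seqg b -> gamma_cover (fun e => exists n, b n = e).
Proof.
  intros H1 H2. apply (gamma_ext _ _ (range_gamma _ nil H1 H2)).
  intro V; split; [intros [k [H _]]; eauto|intros [k H]; exists k; split; auto].
Qed.

End Cov.

Section Top.
Context {X : Type} (T : Topology X).

Lemma open_ext (P Q : X -> Prop) : is_open T P -> (forall x, P x <-> Q x) -> is_open T Q.
Proof. intros H E. replace Q with P; auto. apply set_ext; auto. Qed.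

Lemma open_local (P : X -> Prop) :
  (forall x, P x -> exists W, is_open T W /\ W x /\ forall y, W y -> P y) -> is_open T P.
Proof.
  intros H. apply (open_ext (fun x => exists W, (is_open T W /\ forall y, W y -> P y) /\ W x)).
  - apply open_union. intros U [HU _]; auto.
  - intro x; split.
    + intros [W [[_ HW] Wx]]; auto.
    + intros Px. destruct (H x Px) as [W [HW [Wx HWP]]]. exists W; auto.
Qed.

Definition eps_delta (phi : R -> R) (s0 : R) :=
  forall eps, eps > 0 -> exists del, del > 0 /\ forall s, Rabs (s - s0) < del -> Rabs (phi s - phi s0) < eps.
Definition eps_delta2 (phi : R -> R -> R) (a0 b0 : R) :=
  forall eps, eps > 0 -> exists del, del > 0 /\ forall a b, Rabs (a - a0) < del -> Rabs (b - b0) < del ->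
     Rabs (phi a b - phi a0 b0) < eps.

Lemma ball_open (c e : R) : R_open (fun r => Rabs (r - c) < e).
Proof.
  intros r Hr. exists (e - Rabs (r - c)). split; [lra|].
  intros s Hs. replace (s - c) with ((s - r) + (r - c)) by ring.
  pose proof (Rabs_triang (s - r) (r - c)). lra.
Qed.

Lemma ball_preimage_open (g : X -> R) (c e : R) : continuous T g -> is_open T (fun x => Rabs (g x - c) < e).
Proof. intros Hg. apply (Hg _ (ball_open c e)). Qed.

Lemma cont_const (c : R) : continuous T (fun _ => c).
Proof.
  intros O HO. apply open_local. intros x Ox. exists (fun _ => True). split; [apply open_all|]. auto.
Qed.

Lemma cont_comp1 (g : X -> R) (phi : R -> R) : continuous T g -> (forall x, eps_delta phi (g x)) ->
  continuous T (fun x => phi (g x)).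
Proof.
  intros Hg Hphi O HO. apply open_local. intros x Ox.
  destruct (HO _ Ox) as [e [He HOe]]. destruct (Hphi x e He) as [d [Hd Hdd]].
  exists (fun y => Rabs (g y - g x) < d). split; [apply ball_preimage_open; auto|].
  split; [rewrite Rminus_diag, Rabs_R0; auto|]. intros y Hy. apply HOe. apply Hdd; auto.
Qed.

Lemma cont_comp2 (g1 g2 : X -> R) (phi : R -> R -> R) : continuous T g1 -> continuous T g2 ->
  (forall x, eps_delta2 phi (g1 x) (g2 x)) -> continuous T (fun x => phi (g1 x) (g2 x)).
Proof.
  intros Hg1 Hg2 Hphi O HO. apply open_local. intros x Ox.
  destruct (HO _ Ox) as [e [He HOe]]. destruct (Hphi x e He) as [d [Hd Hdd]].
  exists (fun y => Rabs (g1 y - g1 x) < d /\ Rabs (g2 y - g2 x) < d). split.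
  { apply open_inter; apply ball_preimage_open; auto. }
  split; [rewrite !Rminus_diag, !Rabs_R0; auto|]. intros y [Hy1 Hy2]. apply HOe. apply Hdd; auto.
Qed.

End Top.

Lemma lipschitz_ed (phi : R -> R) (C : R) : C > 0 -> (forall a b, Rabs (phi a - phi b) <= C * Rabs (a - b)) ->
  forall s0, eps_delta phi s0.
Proof.
  intros HC H s0 e He. exists (e / C). split; [apply Rdiv_lt_0_compat; auto|].
  intros s Hs. eapply Rle_lt_trans; [apply H|].
  apply Rmult_lt_reg_l with (/ C); [apply Rinv_0_lt_compat; auto|].
  rewrite <- Rmult_assoc, Rinv_l, Rmult_1_l by lra. unfold Rdiv in Hs. lra.
Qed.

Lemma ed_abs s0 : eps_delta Rabs s0.
Proof.
  apply (lipschitz_ed _ 1); [lra|]. intros a b. rewrite Rmult_1_l. apply Rabs_triang_inv2.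
Qed.

Lemma ed_plus a0 b0 : eps_delta2 Rplus a0 b0.
Proof.
  intros e He. exists (e/2). split; [lra|]. intros a b Ha Hb.
  replace (a + b - (a0 + b0)) with ((a - a0) + (b - b0)) by ring.
  pose proof (Rabs_triang (a - a0) (b - b0)). lra.
Qed.

Lemma ed_mult a0 b0 : eps_delta2 Rmult a0 b0.
Proof.
  intros e He. set (M := Rabs a0 + Rabs b0 + 1).
  assert (HM : M > 0) by (unfold M; pose proof (Rabs_pos a0); pose proof (Rabs_pos b0); lra).
  exists (Rmin 1 (e / M)). split.
  { apply Rmin_glb_lt; [lra|apply Rdiv_lt_0_compat; auto]. }
  intros a b Ha Hb.
  assert (Hd1 := Rmin_l 1 (e/M)). assert (Hd2 := Rmin_r 1 (e/M)).
  replace (a * b - a0 * b0) with (a * (b - b0) + b0 * (a - a0)) by ring.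
  eapply Rle_lt_trans; [apply Rabs_triang|]. rewrite !Rabs_mult.
  assert (Ha' : Rabs a <= Rabs a0 + 1).
  { replace a with ((a - a0) + a0) by ring. pose proof (Rabs_triang (a - a0) a0). lra. }
  assert (H1 : Rabs a * Rabs (b - b0) <= (Rabs a0 + 1) * (e / M)).
  { apply Rmult_le_compat; try apply Rabs_pos; lra. }
  assert (H2 : Rabs b0 * Rabs (a - a0) <= Rabs b0 * (e / M)).
  { apply Rmult_le_compat_l; [apply Rabs_pos|lra]. }
  assert (H3 : (Rabs a0 + 1) * (e / M) + Rabs b0 * (e / M) = e).
  { unfold M. field. pose proof (Rabs_pos a0); pose proof (Rabs_pos b0); lra. }
  (* strictness: Rabs(b-b0) < e/M strictly *)
  assert (H1' : Rabs a * Rabs (b - b0) < (Rabs a0 + 1) * (e / M)).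
  { apply Rle_lt_trans with ((Rabs a0 + 1) * Rabs (b - b0)).
    - apply Rmult_le_compat_r; [apply Rabs_pos|lra].
    - apply Rmult_lt_compat_l; [pose proof (Rabs_pos a0); lra|lra]. }
  rewrite <- H3. apply Rplus_lt_le_compat; auto.
Qed.

Lemma ed_inv s0 : s0 > 0 -> eps_delta Rinv s0.
Proof.
  intros Hs0 e He. exists (Rmin (s0/2) (e * s0 * s0 / 2)). split.
  { apply Rmin_glb_lt; [lra|]. apply Rdiv_lt_0_compat; [|lra]. apply Rmult_lt_0_compat; [apply Rmult_lt_0_compat|]; lra. }
  intros s Hs. assert (Hd1 := Rmin_l (s0/2) (e * s0 * s0 / 2)). assert (Hd2 := Rmin_r (s0/2) (e * s0 * s0 / 2)).
  assert (Hss : Rabs (s - s0) < s0 / 2) by lra.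
  apply Rabs_def2 in Hss. assert (Hs_pos : s > s0 / 2) by lra.
  replace (/ s - / s0) with ((s0 - s) / (s * s0)) by (field; lra).
  unfold Rdiv. rewrite Rabs_mult, Rabs_inv.
  rewrite (Rabs_pos_eq (s * s0)) by (apply Rmult_le_pos; lra).
  rewrite <- Rabs_Ropp. replace (- (s0 - s)) with (s - s0) by ring.
  apply Rmult_lt_reg_r with (s * s0); [apply Rmult_lt_0_compat; lra|].
  rewrite Rmult_assoc, Rinv_l, Rmult_1_r by (apply Rgt_not_eq, Rmult_lt_0_compat; lra).
  apply Rlt_le_trans with (e * s0 * s0 / 2); [lra|].
  assert (e * s0 * s0 / 2 = e * ((s0/2) * s0)) by field. rewrite H.
  apply Rmult_le_compat_l; [lra|]. apply Rmult_le_compat_r; lra.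
Qed.

Lemma ed_minus a0 b0 : eps_delta2 Rminus a0 b0.
Proof.
  intros e He. exists (e/2). split; [lra|]. intros a b Ha Hb.
  replace (a - b - (a0 - b0)) with ((a - a0) + - (b - b0)) by ring.
  pose proof (Rabs_triang (a - a0) (- (b - b0))). rewrite Rabs_Ropp in H. lra.
Qed.

Lemma Rabs_eq_0 r : Rabs r = 0 -> r = 0.
Proof. intros H. destruct (Req_dec r 0); auto. exfalso; apply (Rabs_no_R0 r); auto. Qed.

Section Top2.
Context {X : Type} (T : Topology X).

Lemma cont_abs g : continuous T g -> continuous T (fun x => Rabs (g x)).
Proof. intros H. apply cont_comp1; auto. intro; apply ed_abs. Qed.
Lemma cont_plus g1 g2 : continuous T g1 -> continuous T g2 -> continuous T (fun x => g1 x + g2 x).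
Proof. intros H1 H2. apply (cont_comp2 T g1 g2 Rplus); auto. intro; apply ed_plus. Qed.
Lemma cont_minus g1 g2 : continuous T g1 -> continuous T g2 -> continuous T (fun x => g1 x - g2 x).
Proof. intros H1 H2. apply (cont_comp2 T g1 g2 Rminus); auto. intro; apply ed_minus. Qed.
Lemma cont_mult g1 g2 : continuous T g1 -> continuous T g2 -> continuous T (fun x => g1 x * g2 x).
Proof. intros H1 H2. apply (cont_comp2 T g1 g2 Rmult); auto. intro; apply ed_mult. Qed.

Lemma neq0_open : R_open (fun r => r <> 0).
Proof.
  intros r Hr. exists (Rabs r). split; [apply Rabs_pos_lt; auto|].
  intros s Hs Hs0. subst s. rewrite Rminus_0_l, Rabs_Ropp in Hs. lra.
Qed.

Lemma cozero_open U : cozero_set T U -> is_open T U.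
Proof.
  intros [g [Hg HU]]. apply (open_ext T (fun x => g x <> 0)); [apply (Hg _ neq0_open)|].
  intro x; rewrite HU; tauto.
Qed.

Lemma zero_compl_open Z : zero_set T Z -> is_open T (fun x => ~ Z x).
Proof.
  intros [g [Hg HZ]]. apply (open_ext T (fun x => g x <> 0)); [apply (Hg _ neq0_open)|].
  intro x; rewrite HZ; tauto.
Qed.

Lemma cozero_compl_zero U : cozero_set T U -> zero_set T (fun x => ~ U x).
Proof.
  intros [g [Hg HU]]. exists g; split; auto. intro x; rewrite HU. split; [apply NNPP|tauto].
Qed.

Lemma zero_and Z1 Z2 : zero_set T Z1 -> zero_set T Z2 -> zero_set T (fun x => Z1 x /\ Z2 x).
Proof.
  intros [g1 [Hg1 H1]] [g2 [Hg2 H2]]. exists (fun x => Rabs (g1 x) + Rabs (g2 x)). split.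
  - apply cont_plus; apply cont_abs; auto.
  - intro x. rewrite H1, H2. pose proof (Rabs_pos (g1 x)); pose proof (Rabs_pos (g2 x)).
    split.
    + intros [-> ->]. rewrite Rabs_R0. ring.
    + intros Hs. split; apply Rabs_eq_0; lra.
Qed.

Lemma cozero_and U1 U2 : cozero_set T U1 -> cozero_set T U2 -> cozero_set T (fun x => U1 x /\ U2 x).
Proof.
  intros [g1 [Hg1 H1]] [g2 [Hg2 H2]]. exists (fun x => g1 x * g2 x). split.
  - apply cont_mult; auto.
  - intro x. rewrite H1, H2. split.
    + intros [Ha Hb]. apply Rmult_integral_contrapositive_currified; auto.
    + intros H; split; intro E; apply H; rewrite E; ring.
Qed.

Definition chi (C : X -> Prop) : X -> R :=
  fun x => if excluded_middle_informative (C x) then 1 else 0.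

Lemma chi_cont C : is_clopen T C -> continuous T (chi C).
Proof.
  intros [HC HnC] O HO. apply open_local. intros x Ox.
  destruct (classic (C x)) as [Cx|nCx].
  - exists C; split; [auto|split; auto]. intros y Cy. unfold chi in *.
    destruct (excluded_middle_informative (C x)); [|tauto].
    destruct (excluded_middle_informative (C y)); [auto|tauto].
  - exists (fun y => ~ C y); split; [exact HnC|split; auto]. intros y Cy. unfold chi in *.
    destruct (excluded_middle_informative (C x)); [tauto|].
    destruct (excluded_middle_informative (C y)); [tauto|auto].
Qed.

Lemma clopen_cozero C : is_clopen T C -> cozero_set T C.
Proof.
  intros H. exists (chi C). split; [apply chi_cont; auto|]. intro x; unfold chi.
  destruct (excluded_middle_informative (C x)); split; intros; auto; try lra; tauto.
Qed.

Lemma clopen_zero C : is_clopen T C -> zero_set T C.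
Proof.
  intros H. exists (fun x => 1 - chi C x). split.
  - apply cont_minus; [apply cont_const|apply chi_cont; auto].
  - intro x; unfold chi. destruct (excluded_middle_informative (C x)); split; intros; auto; try lra; tauto.
Qed.

Lemma clopen_and C1 C2 : is_clopen T C1 -> is_clopen T C2 -> is_clopen T (fun x => C1 x /\ C2 x).
Proof.
  intros [H1 H1'] [H2 H2']. split; [apply open_inter; auto|].
  unfold is_closed. apply open_local. intros x Hx.
  destruct (classic (C1 x)) as [c1|c1].
  - exists (fun y => ~ C2 y). split; [auto|]. split; [tauto|]. tauto.
  - exists (fun y => ~ C1 y). split; [auto|]. split; [tauto|]. tauto.
Qed.

Lemma urysohn Z1 Z2 : zero_set T Z1 -> zero_set T Z2 -> (forall x, ~ (Z1 x /\ Z2 x)) ->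
  exists h, continuous T h /\ forall x, (Z1 x -> h x = 0) /\ (h x = 1 <-> Z2 x) /\ 0 <= h x <= 1.
Proof.
  intros [g1 [Hg1 H1]] [g2 [Hg2 H2]] Hd.
  assert (Hpos : forall x, Rabs (g1 x) + Rabs (g2 x) > 0).
  { intro x. pose proof (Rabs_pos (g1 x)); pose proof (Rabs_pos (g2 x)).
    destruct (Req_dec (g1 x) 0) as [E1|E1].
    - destruct (Req_dec (g2 x) 0) as [E2|E2].
      + exfalso; apply (Hd x); rewrite H1, H2; auto.
      + pose proof (Rabs_pos_lt _ E2); lra.
    - pose proof (Rabs_pos_lt _ E1); lra. }
  exists (fun x => Rabs (g1 x) * / (Rabs (g1 x) + Rabs (g2 x))). split.
  - apply cont_mult; [apply cont_abs; auto|].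
    apply (cont_comp1 T (fun x => Rabs (g1 x) + Rabs (g2 x)) Rinv).
    + apply cont_plus; apply cont_abs; auto.
    + intro x; apply ed_inv; auto.
  - intro x. specialize (Hpos x). pose proof (Rabs_pos (g1 x)); pose proof (Rabs_pos (g2 x)).
    split; [|split].
    + intro Z. rewrite H1 in Z. rewrite Z, Rabs_R0. ring.
    + rewrite H2. split.
      * intro E. apply Rabs_eq_0.
        assert (Rabs (g1 x) = Rabs (g1 x) + Rabs (g2 x)).
        { rewrite <- (Rmult_1_r (Rabs (g1 x) + Rabs (g2 x))). rewrite <- E. field. lra. }
        lra.
      * intro E. rewrite E, Rabs_R0 in Hpos. rewrite E, Rabs_R0, Rplus_0_r. field. lra.
    + split.
      * apply Rmult_le_pos; [lra|]. left; apply Rinv_0_lt_compat; lra.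
      * apply Rmult_le_reg_r with (Rabs (g1 x) + Rabs (g2 x)); [lra|].
        rewrite Rmult_assoc, Rinv_l, Rmult_1_r, Rmult_1_l by lra. lra.
Qed.

End Top2.

Section Pool.
Context {X : Type}.

Lemma pool (A B : ((X -> Prop) -> Prop) -> Prop) (d : nat -> nat -> X -> Prop) :
  Sfin A B -> (forall C, B C -> gamma_cover C) ->
  (forall n L, A (fun V => exists k, d n k = V /\ ~ In V L)) ->
  exists m kk : nat -> nat, (forall n, (n <= m n)%nat) /\
     forall x, exists N, forall n, (N <= n)%nat -> d (m n) (kk n) x.
Proof.
  intros HS HBg HA.
  set (L := fun n : nat => flat_map (fun i => map (d i) (seq 0 (S n))) (seq 0 (S n))).
  assert (HL : forall i k n, (i <= n)%nat -> (k <= n)%nat -> In (d i k) (L n)).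
  { intros i k n Hi Hk. unfold L. apply in_flat_map. exists i. split.
    - apply in_seq; lia.
    - apply in_map, in_seq; lia. }
  set (s := fun n V => exists k, d n k = V /\ ~ In V (L n)).
  destruct (HS s (fun n => HA n (L n))) as [b [Hb HB]].
  set (U := fun e => exists n, In e (b n)).
  assert (Hg : gamma_cover U) by (apply HBg; exact HB).
  destruct Hg as [_ [Hinf Hal]].
  assert (C1 : forall M, exists n, (M <= n)%nat /\ b n <> nil).
  { intros M. apply NNPP; intro Hn.
    destruct (Hinf (flat_map b (seq 0 M))) as [e [[n He] Hne]].
    destruct (Nat.lt_ge_cases n M) as [H|H].
    - apply Hne. apply in_flat_map. exists n; split; auto. apply in_seq; lia.
    - apply Hn. exists n; split; auto. intro E; rewrite E in He; inversion He. }
  assert (C2 : forall l, exists N, forall n, (N <= n)%nat -> forall V, In V (b n) -> ~ In V l).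
  { induction l as [|V0 l [N HN]]; [exists 0%nat; intros n _ V _ []|].
    destruct (classic (exists n0, In V0 (b n0))) as [[n0 Hn0]|Hno].
    - destruct (Hb _ _ Hn0) as [k0 [Hk0 _]].
      exists (Nat.max N (Nat.max n0 k0)). intros n Hn V HV [E|E].
      + destruct (Hb _ _ HV) as [k [Hk HkL]]. apply HkL. rewrite <- E, <- Hk0.
        apply HL; lia.
      + exact (HN n ltac:(lia) V HV E).
    - exists N. intros n Hn V HV [E|E].
      + subst V0; apply Hno; eauto.
      + exact (HN n Hn V HV E). }
  assert (C3 : forall n, exists p : nat * nat, (n <= fst p)%nat /\ In (d (fst p) (snd p)) (b (fst p))).
  { intro n. destruct (C1 n) as [n' [Hn' Hb']]. destruct (b n') as [|V rest] eqn:E; [congruence|].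
    assert (HV : In V (b n')) by (rewrite E; left; auto).
    destruct (Hb _ _ HV) as [k [Hk _]]. exists (n', k). simpl. split; auto. rewrite Hk; auto. }
  set (P := fun n => proj1_sig (constructive_indefinite_description _ (C3 n))).
  assert (HP : forall n, (n <= fst (P n))%nat /\ In (d (fst (P n)) (snd (P n))) (b (fst (P n)))).
  { intro n. exact (proj2_sig (constructive_indefinite_description _ (C3 n))). }
  exists (fun n => fst (P n)), (fun n => snd (P n)). split; [intro n; apply HP|].
  intro x. destruct (Hal x) as [l Hl]. destruct (C2 l) as [N HN]. exists N. intros n Hn.
  destruct (HP n) as [H1 H2]. apply Hl.
  - exists (fst (P n)); auto.
  - apply (HN (fst (P n))); auto; lia.
Qed.

End Pool.

Section Fams.
Context {X : Type} (T : Topology X).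

Lemma famGF (u z : nat -> X -> Prop) (L : list (X -> Prop)) :
  (forall k, cozero_set T (u k)) -> (forall k, zero_set T (z k)) -> (forall k x, z k x -> u k x) ->
  (forall k, exists x, ~ u k x) -> seqg z -> GammaF T (fun V => exists k, u k = V /\ ~ In V L).
Proof.
  intros Hu Hz Hzu Hne Hg.
  assert (Hgu : seqg u).
  { intro x; destruct (Hg x) as [K HK]; exists K; intros k Hk; apply Hzu, HK; auto. }
  assert (Hnez : forall k, exists x, ~ z k x).
  { intro k; destruct (Hne k) as [x Hx]; exists x; intro H; apply Hx, Hzu; auto. }
  set (eps := fun V => epsilon (inhabits 0%nat) (fun k => u k = V)).
  assert (Heps : forall V, (exists k, u k = V) -> u (eps V) = V).
  { intros V HV. unfold eps. apply (epsilon_spec (inhabits 0%nat) (fun k => u k = V)). auto. }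
  split; [apply range_gamma; auto|]. split.
  { intros U [k [<- _]]; auto. }
  exists (fun V => z (eps V)). split.
  { intros U [k [Hk _]]. split; [apply Hz|]. intros x Hx. rewrite <- (Heps U); [apply Hzu; auto|eauto]. }
  apply gamma_from.
  - intros W [U [[k [Hk _]] ->]]. destruct (Hnez (eps U)) as [x Hx]; eauto.
  - intro l. destruct (seq_avoid z Hnez Hg l) as [K1 HK1].
    destruct (seq_avoid u Hne Hgu (L ++ map u (seq 0 K1))) as [K2 HK2].
    exists (z (eps (u K2))). split.
    + exists (u K2). split; auto. exists K2. split; auto. intro H; apply (HK2 K2); auto; apply in_or_app; auto.
    + apply HK1. destruct (Nat.lt_ge_cases (eps (u K2)) K1) as [H|H]; auto.
      exfalso. apply (HK2 K2); auto. apply in_or_app; right.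
      rewrite <- (Heps (u K2)) by eauto. apply in_map, in_seq. lia.
  - intro x. destruct (Hg x) as [K HK]. exists (map z (seq 0 K)).
    intros W [U [_ ->]] Hn. apply HK. destruct (Nat.lt_ge_cases (eps U) K) as [H|H]; auto.
    exfalso; apply Hn. apply in_map, in_seq. lia.
Qed.

Lemma famCl (c : nat -> X -> Prop) (L : list (X -> Prop)) :
  (forall k, is_clopen T (c k)) -> (forall k, exists x, ~ c k x) -> seqg c ->
  GammaCl T (fun V => exists k, c k = V /\ ~ In V L).
Proof.
  intros Hc Hne Hg. split; [apply range_gamma; auto|]. intros U [k [<- _]]; auto.
Qed.

Lemma extractGF (C : (X -> Prop) -> Prop) : GammaF T C ->
  exists u z : nat -> X -> Prop, (forall k, C (u k)) /\ (forall k, cozero_set T (u k)) /\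
    (forall k, zero_set T (z k)) /\ (forall k x, z k x -> u k x) /\ (forall k, exists x, ~ u k x) /\ seqg z.
Proof.
  intros [[[_ Hne] _] [Hco [F [HF [_ [Hinf Hal]]]]]].
  destruct (inj_seq _ Hinf) as [w [Hw Hinj]].
  set (u := fun k => proj1_sig (constructive_indefinite_description _ (Hw k))).
  assert (Hu : forall k, C (u k) /\ w k = F (u k)).
  { intro k. exact (proj2_sig (constructive_indefinite_description _ (Hw k))). }
  exists u, w. split; [intro k; apply Hu|]. split; [intro k; apply Hco, Hu|].
  split; [intro k; rewrite (proj2 (Hu k)); apply HF, Hu|].
  split; [intros k x Hx; rewrite (proj2 (Hu k)) in Hx; apply (proj2 (HF _ (proj1 (Hu k)))); auto|].
  split; [intro k; apply Hne, Hu|].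
  intro x. apply (inj_eventually _ (fun U => U x) w (Hal x) Hw Hinj).
Qed.

Fixpoint inter (u : nat -> nat -> X -> Prop) (j k : nat) : X -> Prop :=
  match j with O => u O k | S j' => fun x => inter u j' k x /\ u (S j') k x end.

Lemma inter_sub u j k x i : (i <= j)%nat -> inter u j k x -> u i k x.
Proof.
  induction j as [|j IH]; intros Hi H; simpl in H.
  - replace i with 0%nat by lia; auto.
  - destruct (Nat.eq_dec i (S j)) as [->|Hne]; [tauto|]. apply IH; [lia|tauto].
Qed.

Lemma inter_mono u v j k x : (forall i k x, u i k x -> v i k x) -> inter u j k x -> inter v j k x.
Proof. intros H; induction j; simpl; [apply H|]. intros [A B]; auto. Qed.

Lemma inter_closed (Q : (X -> Prop) -> Prop) u j k :
  (forall A B, Q A -> Q B -> Q (fun x => A x /\ B x)) -> (forall i k, Q (u i k)) -> Q (inter u j k).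
Proof. intros H1 H2; induction j; simpl; auto. Qed.

Lemma inter_seqg u j : (forall i, seqg (u i)) -> seqg (fun k => inter u j k).
Proof.
  intros H x. induction j as [|j [K HK]]; simpl; [apply H|].
  destruct (H (S j) x) as [K' HK']. exists (Nat.max K K'); intros k Hk; split; [apply HK|apply HK']; lia.
Qed.

Lemma GF_ready (u z : nat -> nat -> X -> Prop) :
  (forall i k, cozero_set T (u i k)) -> (forall i k, zero_set T (z i k)) -> (forall i k x, z i k x -> u i k x) ->
  (forall i k, exists x, ~ u i k x) -> (forall i, seqg (z i)) ->
  forall n L, GammaF T (fun V => exists k, inter u n k = V /\ ~ In V L).
Proof.
  intros Hu Hz Hzu Hne Hg n L.
  apply (famGF (fun k => inter u n k) (fun k => inter z n k)).
  - intro k; apply inter_closed; auto. apply cozero_and.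
  - intro k; apply inter_closed; auto. apply zero_and.
  - intros k x; apply inter_mono; auto.
  - intro k. destruct (Hne 0%nat k) as [x Hx]. exists x. intro H; apply Hx. apply (inter_sub u n k x 0); auto; lia.
  - apply inter_seqg; auto.
Qed.

Lemma Cl_ready (c : nat -> nat -> X -> Prop) :
  (forall i k, is_clopen T (c i k)) -> (forall i k, exists x, ~ c i k x) -> (forall i, seqg (c i)) ->
  forall n L, GammaCl T (fun V => exists k, inter c n k = V /\ ~ In V L).
Proof.
  intros Hc Hne Hg n L. apply (famCl (fun k => inter c n k)).
  - intro k; apply inter_closed; auto. apply clopen_and.
  - intro k. destruct (Hne 0%nat k) as [x Hx]. exists x. intro H; apply Hx. apply (inter_sub c n k x 0); auto; lia.
  - apply inter_seqg; auto.
Qed.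

End Fams.

Section Impl.
Context {X : Type} (T : Topology X).

Lemma GammaO_ext C C' : GammaO T C -> (forall V, C V <-> C' V) -> GammaO T C'.
Proof. intros [Hg Ho] E. split; [apply (gamma_ext C); auto|]. intros U HU; apply Ho, E; auto. Qed.
Lemma GammaCl_ext C C' : GammaCl T C -> (forall V, C V <-> C' V) -> GammaCl T C'.
Proof. intros [Hg Ho] E. split; [apply (gamma_ext C); auto|]. intros U HU; apply Ho, E; auto. Qed.

Lemma S1_Sfin_O A : S1 A (GammaO T) -> Sfin A (GammaO T).
Proof.
  intros H s Hs. destruct (H s Hs) as [b [Hb HB]]. exists (fun n => b n :: nil). split.
  - intros n e [<-|[]]; auto.
  - apply (GammaO_ext _ _ HB). intro V; split; [intros [n <-]; exists n; left; auto|intros [n [<-|[]]]; eauto].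
Qed.
Lemma S1_Sfin_Cl A : S1 A (GammaCl T) -> Sfin A (GammaCl T).
Proof.
  intros H s Hs. destruct (H s Hs) as [b [Hb HB]]. exists (fun n => b n :: nil). split.
  - intros n e [<-|[]]; auto.
  - apply (GammaCl_ext _ _ HB). intro V; split; [intros [n <-]; exists n; left; auto|intros [n [<-|[]]]; eauto].
Qed.

Lemma extract_all (s : nat -> (X -> Prop) -> Prop) : (forall n, GammaF T (s n)) ->
  exists u z : nat -> nat -> X -> Prop, (forall n k, s n (u n k)) /\ (forall n k, cozero_set T (u n k)) /\
    (forall n k, zero_set T (z n k)) /\ (forall n k x, z n k x -> u n k x) /\
    (forall n k, exists x, ~ u n k x) /\ (forall n, seqg (z n)).
Proof.
  intros Hs.
  assert (H : forall n, exists p : (nat -> X -> Prop) * (nat -> X -> Prop),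
    (forall k, s n (fst p k)) /\ (forall k, cozero_set T (fst p k)) /\
    (forall k, zero_set T (snd p k)) /\ (forall k x, snd p k x -> fst p k x) /\ (forall k, exists x, ~ fst p k x) /\ seqg (snd p)).
  { intro n. destruct (extractGF T _ (Hs n)) as [u [z H]]. exists (u, z); exact H. }
  destruct (choice _ H) as [f Hf].
  exists (fun n => fst (f n)), (fun n => snd (f n)).
  repeat split; intros; apply Hf; auto.
Qed.

Lemma out_gammaO (b : nat -> X -> Prop) : (forall n, cozero_set T (b n)) -> (forall n, exists x, ~ b n x) ->
  seqg b -> GammaO T (fun e => exists n, b n = e).
Proof.
  intros H1 H2 H3. split; [apply seq_gamma; auto|]. intros U [n <-]. apply cozero_open; auto.
Qed.

Theorem two_four : Sfin (GammaF T) (GammaO T) -> S1 (GammaF T) (GammaO T).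
Proof.
  intros H2 s Hs. destruct (extract_all s Hs) as [u [z [Hs' [Hu [Hz [Hzu [Hne Hg]]]]]]].
  destruct (pool (GammaF T) (GammaO T) (inter u) H2 (fun C HC => proj1 HC)
              (GF_ready T u z Hu Hz Hzu Hne Hg)) as [m [kk [Hm Hx]]].
  exists (fun n => u n (kk n)). split; [intro n; apply Hs'|].
  apply out_gammaO; auto.
  intro x. destruct (Hx x) as [N HN]. exists N. intros n Hn. apply (inter_sub u (m n) (kk n) x n); auto.
Qed.

Theorem three_four : Sfin (GammaCl T) (GammaCl T) -> strongly_zero_dim T -> S1 (GammaF T) (GammaO T).
Proof.
  intros H3 Hszd s Hs. destruct (extract_all s Hs) as [u [z [Hs' [Hu [Hz [Hzu [Hne Hg]]]]]]].
  assert (Hc : forall p : nat * nat, exists C, is_clopen T C /\ (forall x, z (fst p) (snd p) x -> C x) /\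
                  (forall x, C x -> u (fst p) (snd p) x)).
  { intros [n k]. simpl. destruct (Hszd (z n k) (fun x => ~ u n k x) (Hz n k) (cozero_compl_zero T _ (Hu n k)))
      as [C [HC [H1 H2]]].
    - intros x [A B]; apply B, Hzu; auto.
    - exists C; split; auto. split; auto. intros x Cx. apply NNPP; intro N. apply (H2 x); auto. }
  destruct (choice _ Hc) as [cf Hcf].
  set (c := fun n k => cf (n, k)).
  assert (Hcc : forall n k, is_clopen T (c n k)) by (intros; apply Hcf).
  assert (Hzc : forall n k x, z n k x -> c n k x) by (intros n k; apply (Hcf (n, k))).
  assert (Hcu : forall n k x, c n k x -> u n k x) by (intros n k; apply (Hcf (n, k))).
  assert (Hnec : forall n k, exists x, ~ c n k x).
  { intros n k; destruct (Hne n k) as [x Hx]; exists x; intro; apply Hx, Hcu; auto. }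
  assert (Hgc : forall n, seqg (c n)).
  { intros n x; destruct (Hg n x) as [K HK]; exists K; intros; apply Hzc, HK; auto. }
  destruct (pool (GammaCl T) (GammaCl T) (inter c) H3 (fun C HC => proj1 HC)
              (Cl_ready T c Hcc Hnec Hgc)) as [m [kk [Hm Hx]]].
  exists (fun n => u n (kk n)). split; [intro n; apply Hs'|].
  apply out_gammaO; auto.
  intro x. destruct (Hx x) as [N HN]. exists N. intros n Hn. apply Hcu. apply (inter_sub c (m n) (kk n) x n); auto.
Qed.

Theorem four_cl : S1 (GammaF T) (GammaO T) -> Sfin (GammaCl T) (GammaCl T).
Proof.
  intros H4. apply S1_Sfin_Cl. intros s Hs.
  assert (HF : forall n, GammaF T (s n)).
  { intro n. destruct (Hs n) as [Hg Hcl]. split; auto. split; [intros U HU; apply clopen_cozero; auto|].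
    exists (fun U => U). split; [intros U HU; split; [apply clopen_zero|]; auto|].
    apply (gamma_ext (s n)); auto. intro V; split; [intro; exists V; auto|intros [U [HU ->]]; auto]. }
  destruct (H4 s HF) as [b [Hb [Hg _]]]. exists b. split; auto. split; auto.
  intros U [n <-]. apply (Hs n); auto.
Qed.

End Impl.

Definition fl (s : R) : R := IZR (up s) - 1.
Lemma fl_spec s : fl s <= s < fl s + 1.
Proof. unfold fl; destruct (archimed s); lra. Qed.
Definition pp (s : R) : R := Rmin (s - fl s) (fl s + 1 - s).

Lemma pp_nonneg s : 0 <= pp s.
Proof. unfold pp; destruct (fl_spec s); apply Rmin_glb; lra. Qed.

Lemma pp_nearest s (z : Z) : pp s <= Rabs (s - IZR z).
Proof.
  destruct (fl_spec s) as [H1 H2].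
  assert (Hm : fl s = IZR (up s - 1)) by (unfold fl; rewrite minus_IZR; reflexivity).
  destruct (Z.le_gt_cases z (up s - 1)) as [Hz|Hz].
  - apply IZR_le in Hz. rewrite <- Hm in Hz. rewrite Rabs_pos_eq by lra.
    unfold pp. eapply Rle_trans; [apply Rmin_l|lra].
  - assert (Hz' : (up s <= z)%Z) by lia. apply IZR_le in Hz'.
    assert (IZR (up s) = fl s + 1) by (unfold fl; ring).
    rewrite Rabs_left1 by lra. unfold pp. eapply Rle_trans; [apply Rmin_r|lra].
Qed.

Lemma pp_attained s : exists z : Z, pp s = Rabs (s - IZR z).
Proof.
  destruct (fl_spec s) as [H1 H2].
  assert (Hm : fl s = IZR (up s - 1)) by (unfold fl; rewrite minus_IZR; reflexivity).
  unfold pp. apply Rmin_case.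
  - exists (up s - 1)%Z. rewrite <- Hm. rewrite Rabs_pos_eq; lra.
  - exists (up s). rewrite Rabs_left1; unfold fl in *; lra.
Qed.

Lemma pp_lip a b : Rabs (pp a - pp b) <= Rabs (a - b).
Proof.
  assert (K : forall a b, pp a <= pp b + Rabs (a - b)).
  { intros x y. destruct (pp_attained y) as [z Hz].
    eapply Rle_trans; [apply (pp_nearest x z)|]. rewrite Hz.
    replace (x - IZR z) with ((x - y) + (y - IZR z)) by ring.
    pose proof (Rabs_triang (x - y) (y - IZR z)); lra. }
  pose proof (K a b); pose proof (K b a). rewrite Rabs_minus_sym in H0.
  unfold Rabs at 1; destruct (Rcase_abs (pp a - pp b)); lra.
Qed.

Lemma pp_exact (m : Z) s : IZR m <= s <= IZR m + /2 -> pp s = s - IZR m.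
Proof.
  intros [H1 H2]. apply Rle_antisym.
  - pose proof (pp_nearest s m). rewrite Rabs_pos_eq in H by lra. auto.
  - destruct (pp_attained s) as [z Hz]. rewrite Hz.
    destruct (Z.le_gt_cases z m) as [E|E].
    + apply IZR_le in E. rewrite Rabs_pos_eq; lra.
    + assert (E' : (m + 1 <= z)%Z) by lia. apply IZR_le in E'. rewrite plus_IZR in E'.
      rewrite Rabs_left1; lra.
Qed.

Lemma Rmax0_lip x y : Rabs (Rmax 0 x - Rmax 0 y) <= Rabs (x - y).
Proof.
  unfold Rmax; destruct (Rle_dec 0 x); destruct (Rle_dec 0 y);
  unfold Rabs; repeat destruct Rcase_abs; lra.
Qed.
Lemma Rmin_lip x y x' y' : Rabs (Rmin x y - Rmin x' y') <= Rabs (x - x') + Rabs (y - y').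
Proof.
  unfold Rmin; destruct (Rle_dec x y); destruct (Rle_dec x' y');
  unfold Rabs; repeat destruct Rcase_abs; lra.
Qed.

Definition lam (n : nat) : R := INR n + 1.
Definition a' (k : nat) : R := / (INR k + 3).
Definition b' (k : nat) : R := / (INR k + 2).
Definition wd (k : nat) : R := (b' k - a' k) / 4.
Definition aa (k : nat) : R := a' k + wd k.
Definition bb (k : nat) : R := b' k - wd k.

Lemma lam_pos n : lam n >= 1.
Proof. unfold lam; pose proof (pos_INR n); lra. Qed.

Lemma consts k : 0 < a' k /\ a' k < aa k /\ aa k < bb k /\ bb k < b' k /\ b' k <= /2.
Proof.
  pose proof (pos_INR k).
  assert (0 < a' k) by (unfold a'; apply Rinv_0_lt_compat; lra).
  assert (a' k < b' k) by (unfold a', b'; apply Rinv_lt_contravar; [apply Rmult_lt_0_compat|]; lra).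
  assert (b' k <= /2) by (unfold b'; apply Rinv_le_contravar; lra).
  unfold aa, bb, wd. repeat split; lra.
Qed.

Lemma bands_disj k k' c : (k <> k')%nat -> a' k < c < b' k -> a' k' < c < b' k' -> False.
Proof.
  intros Hne H1 H2.
  assert (G : forall i j, (i < j)%nat -> b' j <= a' i).
  { intros i j Hij. unfold a', b'. apply Rinv_le_contravar.
    - pose proof (pos_INR i); lra.
    - assert (Hs : (S i <= j)%nat) by lia. apply le_INR in Hs. rewrite S_INR in Hs. lra. }
  destruct (Nat.lt_gt_cases k k') as [Hc _]. destruct (Hc Hne) as [H|H].
  - pose proof (G _ _ H); lra.
  - pose proof (G _ _ H); lra.
Qed.

Definition cf n t := pp (lam n * t).
Definition EE n k t := aa k <= cf n t <= bb k.
Definition OO n k t := a' k < cf n t < b' k.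
Definition psiE n k t := Rmax 0 (aa k - cf n t) + Rmax 0 (cf n t - bb k).
Definition psiO n k t := Rmax 0 (Rmin (cf n t - a' k) (b' k - cf n t)).

Lemma cf_lip n t t' : Rabs (cf n t - cf n t') <= lam n * Rabs (t - t').
Proof.
  unfold cf. eapply Rle_trans; [apply pp_lip|].
  replace (lam n * t - lam n * t') with (lam n * (t - t')) by ring.
  rewrite Rabs_mult, (Rabs_pos_eq (lam n)); [lra|]. pose proof (lam_pos n); lra.
Qed.

Lemma psiE_lip n k t t' : Rabs (psiE n k t - psiE n k t') <= (2 * lam n) * Rabs (t - t').
Proof.
  unfold psiE.
  pose proof (Rmax0_lip (aa k - cf n t) (aa k - cf n t')).
  pose proof (Rmax0_lip (cf n t - bb k) (cf n t' - bb k)).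
  replace (aa k - cf n t - (aa k - cf n t')) with (- (cf n t - cf n t')) in H by ring.
  replace (cf n t - bb k - (cf n t' - bb k)) with (cf n t - cf n t') in H0 by ring.
  rewrite Rabs_Ropp in H. pose proof (cf_lip n t t').
  match goal with |- Rabs (?A + ?B - (?C + ?D)) <= _ =>
    replace (A + B - (C + D)) with ((A - C) + (B - D)) by ring end.
  eapply Rle_trans; [apply Rabs_triang|]. lra.
Qed.

Lemma psiO_lip n k t t' : Rabs (psiO n k t - psiO n k t') <= (2 * lam n) * Rabs (t - t').
Proof.
  unfold psiO. eapply Rle_trans; [apply Rmax0_lip|]. eapply Rle_trans; [apply Rmin_lip|].
  replace (cf n t - a' k - (cf n t' - a' k)) with (cf n t - cf n t') by ring.
  replace (b' k - cf n t - (b' k - cf n t')) with (- (cf n t - cf n t')) by ring.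
  rewrite Rabs_Ropp. pose proof (cf_lip n t t'). lra.
Qed.

Lemma psiE_zero n k t : psiE n k t = 0 <-> EE n k t.
Proof.
  unfold psiE, EE. pose proof (consts k). unfold Rmax; destruct (Rle_dec 0 (aa k - cf n t));
  destruct (Rle_dec 0 (cf n t - bb k)); split; intros; lra.
Qed.

Lemma psiO_zero n k t : psiO n k t = 0 <-> ~ OO n k t.
Proof.
  unfold psiO, OO. unfold Rmax, Rmin.
  destruct (Rle_dec (cf n t - a' k) (b' k - cf n t));
  destruct (Rle_dec 0 _); split; intros; try lra; apply NNPP; intro; lra.
Qed.

Lemma EE_sub_OO n k t : EE n k t -> OO n k t.
Proof. unfold EE, OO; pose proof (consts k); lra. Qed.

Lemma step_exists n k l r : 2 / lam n < r - l ->
  exists l' r', l <= l' /\ l' < r' /\ r' <= r /\ forall t, l' <= t <= r' -> EE n k t.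
Proof.
  intros H. pose proof (lam_pos n) as Hl. set (L := lam n) in *.
  assert (H2 : 2 < L * (r - l)).
  { apply Rmult_lt_compat_l with (r := L) in H; [|lra].
    replace (L * (2 / L)) with 2 in H by (field; lra). auto. }
  destruct (archimed (L * l)) as [Hm1 Hm2]. set (m := up (L * l)) in *.
  destruct (consts k) as [C1 [C2 [C3 [C4 C5]]]].
  exists ((IZR m + aa k) / L), ((IZR m + bb k) / L).
  assert (E1 : forall y, L * (y / L) = y) by (intro; field; lra).
  split; [|split; [|split]].
  - apply Rmult_le_reg_l with L; [lra|]. rewrite E1. lra.
  - apply Rmult_lt_reg_l with L; [lra|]. rewrite !E1. lra.
  - apply Rmult_le_reg_l with L; [lra|]. rewrite E1. nra.
  - intros t [Ht1 Ht2].
    apply Rmult_le_compat_l with (r := L) in Ht1; [|lra]. apply Rmult_le_compat_l with (r := L) in Ht2; [|lra].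
    rewrite E1 in Ht1, Ht2. unfold EE, cf. fold L.
    rewrite (pp_exact m); lra.
Qed.

Section RG.
Context {X : Type} (T : Topology X).

Lemma range_gap : S1 (GammaF T) (GammaO T) -> forall f, continuous T f ->
  ~ (forall t, 0 < t < 1 -> exists x, f x = t).
Proof.
  intros H4 f Hf Hr.
  set (U := fun n k x => ~ EE n k (f x)).
  set (Z := fun n k x => ~ OO n k (f x)).
  assert (HU : forall n k, cozero_set T (U n k)).
  { intros n k. exists (fun x => psiE n k (f x)). split.
    - apply (cont_comp1 T f (psiE n k) Hf). intro x.
      apply (lipschitz_ed _ (2 * lam n)); [pose proof (lam_pos n); lra|apply psiE_lip].
    - intro x. unfold U. rewrite psiE_zero. tauto. }
  assert (HZ : forall n k, zero_set T (Z n k)).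
  { intros n k. exists (fun x => psiO n k (f x)). split.
    - apply (cont_comp1 T f (psiO n k) Hf). intro x.
      apply (lipschitz_ed _ (2 * lam n)); [pose proof (lam_pos n); lra|apply psiO_lip].
    - intro x. unfold Z. rewrite psiO_zero. tauto. }
  assert (HZU : forall n k x, Z n k x -> U n k x).
  { intros n k x H1 H2. apply H1, EE_sub_OO; auto. }
  assert (Hne : forall n k, exists x, ~ U n k x).
  { intros n k. destruct (consts k) as [C1 [C2 [C3 [C4 C5]]]]. pose proof (lam_pos n).
    set (t := aa k / lam n).
    assert (Ht : 0 < t < 1).
    { unfold t. split; [apply Rdiv_lt_0_compat; lra|].
      apply Rmult_lt_reg_l with (lam n); [lra|]. replace (lam n * (aa k / lam n)) with (aa k) by (field; lra). nra. }
    destruct (Hr t Ht) as [x Hx]. exists x. unfold U. rewrite Hx. intro N; apply N.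
    unfold EE, cf, t. replace (lam n * (aa k / lam n)) with (aa k) by (field; lra).
    rewrite (pp_exact 0); simpl; lra. }
  assert (Hg : forall n, seqg (Z n)).
  { intros n x. destruct (classic (exists k0, OO n k0 (f x))) as [[k0 Hk0]|Hno].
    - exists (S k0). intros k Hk HO. apply (bands_disj k k0 (cf n (f x))); [lia|exact HO|exact Hk0].
    - exists 0%nat. intros k _ HO. apply Hno; eauto. }
  set (s := fun n V => exists k, U n k = V /\ ~ In V nil).
  assert (Hs : forall n, GammaF T (s n)).
  { intro n. apply (famGF T (U n) (Z n) nil); auto. }
  destruct (H4 s Hs) as [b [Hb HW]].
  assert (Hkn : forall n, exists k, U n k = b n) by (intro n; destruct (Hb n) as [k [Hk _]]; eauto).
  destruct (choice _ Hkn) as [kn Hkn'].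
  destruct HW as [[_ [Hinf Hal]] _].
  assert (New : forall M, exists n, (M <= n)%nat /\ forall j, (j < n)%nat -> b j <> b n).
  { intro M. apply NNPP; intro Hn.
    assert (Hall : forall n, In (b n) (map b (seq 0 M))).
    { intro n. induction n as [n IH] using lt_wf_ind.
      destruct (Nat.lt_ge_cases n M) as [H|H].
      - apply in_map, in_seq; lia.
      - destruct (classic (exists j, (j < n)%nat /\ b j = b n)) as [[j [Hj E]]|Hno].
        + rewrite <- E; apply IH; auto.
        + exfalso; apply Hn. exists n; split; auto. intros j Hj E; apply Hno; eauto. }
    destruct (Hinf (map b (seq 0 M))) as [e [[n <-] Hne']]. apply Hne', Hall. }
  set (Pstep := fun (p q : R * R * nat) =>
     fst (fst p) < snd (fst p) -> fst (fst p) <= fst (fst q) /\ fst (fst q) < snd (fst q) /\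
       snd (fst q) <= snd (fst p) /\ (snd p < snd q)%nat /\ (forall j, (j < snd q)%nat -> b j <> b (snd q)) /\
       forall t, fst (fst q) <= t <= snd (fst q) -> EE (snd q) (kn (snd q)) t).
  assert (Hstep : forall p, exists q, Pstep p q).
  { intros [[l r] n0]. destruct (classic (l < r)) as [Hlr|Hlr]; [|exists (l, r, n0); intro; simpl in *; tauto].
    destruct (archimed_cor1 ((r - l) / 2)) as [N [HN1 HN2]]; [lra|].
    destruct (New (Nat.max N (S n0))) as [n' [Hn' Hnew]].
    assert (Hlam : 2 / lam n' < r - l).
    { assert (INR N <= lam n').
      { unfold lam. assert (INR N <= INR n') by (apply le_INR; lia). lra. }
      assert (0 < INR N) by (apply lt_0_INR; lia).
      assert (/ lam n' <= / INR N) by (apply Rinv_le_contravar; lra).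
      unfold Rdiv. lra. }
    destruct (step_exists n' (kn n') l r Hlam) as [l' [r' [H1 [H2 [H3 H5]]]]].
    exists (l', r', n'). intro; simpl. split; [auto|]. split; [auto|]. split; [auto|]. split; [lia|]. split; [exact Hnew|exact H5]. }
  destruct (choice _ Hstep) as [g Hgs].
  set (sq := fun i => Nat.iter i g (/4, 3/4, 0%nat)).
  set (Li := fun i => fst (fst (sq i))). set (Ri := fun i => snd (fst (sq i))). set (Ni := fun i => snd (sq i)).
  assert (Hsq : forall i, sq (S i) = g (sq i)) by reflexivity.
  assert (Inv : forall i, Li i < Ri i).
  { induction i as [|i IH]; [unfold Li, Ri, sq; simpl; lra|].
    destruct (Hgs (sq i) IH) as [_ [H _]]. unfold Li, Ri in *. rewrite Hsq. auto. }
  assert (St : forall i, Pstep (sq i) (sq (S i))) by (intro i; rewrite Hsq; apply Hgs).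
  assert (Mono : forall i j, (i <= j)%nat -> Li i <= Li j /\ Ri j <= Ri i).
  { intros i j Hij. induction Hij as [|j Hij [IH1 IH2]]; [lra|].
    destruct (St j (Inv j)) as [A1 [_ [A3 _]]]. unfold Li, Ri in *. lra. }
  assert (NS : forall i j, (i < j)%nat -> (Ni i < Ni j)%nat).
  { intros i j Hij. induction Hij as [|j Hij IH].
    - destruct (St i (Inv i)) as [_ [_ [_ [A _]]]]. exact A.
    - destruct (St j (Inv j)) as [_ [_ [_ [A _]]]]. unfold Ni in *. lia. }
  destruct (completeness (fun y => exists i, y = Li i)) as [t [Ht1 Ht2]].
  { exists (Ri 0%nat). intros y [i ->]. pose proof (Mono 0%nat i ltac:(lia)). pose proof (Inv i). lra. }
  { exists (Li 0%nat); eauto. }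
  assert (Ht : forall i, Li i <= t <= Ri i).
  { intro i. split; [apply Ht1; eauto|]. apply Ht2. intros y [j ->].
    pose proof (Mono i (Nat.max i j) ltac:(lia)). pose proof (Mono j (Nat.max i j) ltac:(lia)).
    pose proof (Inv (Nat.max i j)). lra. }
  assert (Ht01 : 0 < t < 1).
  { pose proof (Ht 0%nat). unfold Li, Ri, sq in H; simpl in H. lra. }
  destruct (Hr t Ht01) as [x Hx].
  set (w := fun i => b (Ni (S i))).
  assert (Hwinj : injective_seq w).
  { intros i j E. destruct (Nat.lt_trichotomy i j) as [H|[H|H]]; auto; exfalso.
    - destruct (St j (Inv j)) as [_ [_ [_ [_ [A _]]]]]. apply (A (Ni (S i))); [apply NS; lia|]. exact E.
    - destruct (St i (Inv i)) as [_ [_ [_ [_ [A _]]]]]. apply (A (Ni (S j))); [apply NS; lia|]. symmetry; exact E. }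
  assert (Hwx : forall i, ~ w i x).
  { intro i. unfold w. rewrite <- Hkn'. unfold U. intro N. apply N. rewrite Hx.
    destruct (St i (Inv i)) as [_ [_ [_ [_ [_ A]]]]]. apply A. apply (Ht (S i)). }
  destruct (Hal x) as [l Hl]. destruct (inj_avoid w Hwinj l) as [K HK].
  apply (Hwx K). apply Hl; [exists (Ni (S K)); reflexivity|]. apply HK; lia.
Qed.

Lemma lt_open (t : R) : R_open (fun r => r < t).
Proof. intros r Hr. exists (t - r). split; [lra|]. intros s Hs. apply Rabs_def2 in Hs. lra. Qed.
Lemma gt_open (t : R) : R_open (fun r => t < r).
Proof. intros r Hr. exists (r - t). split; [lra|]. intros s Hs. apply Rabs_def2 in Hs. lra. Qed.

Theorem four_szd : S1 (GammaF T) (GammaO T) -> strongly_zero_dim T.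
Proof.
  intros H4 Z1 Z2 H1 H2 Hd.
  destruct (urysohn T Z1 Z2 H1 H2 Hd) as [h [Hh Hhp]].
  assert (Hgap : exists t, 0 < t < 1 /\ forall x, h x <> t).
  { apply NNPP; intro Hn. apply (range_gap H4 h Hh). intros t Ht. apply NNPP; intro Hn2.
    apply Hn. exists t; split; auto. intros x E; apply Hn2; eauto. }
  destruct Hgap as [t [Ht Hx]].
  exists (fun x => h x < t). split; [split|split].
  - apply (Hh _ (lt_open t)).
  - unfold is_closed. apply (open_ext T (fun x => t < h x)); [apply (Hh _ (gt_open t))|].
    intro x; specialize (Hx x); split; intros; lra.
  - intros x Zx. destruct (Hhp x) as [A _]. rewrite A; auto; lra.
  - intros x Zx. destruct (Hhp x) as [_ [[_ B] _]]. rewrite B; auto; lra.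
Qed.

End RG.

Section CpS.
Context {X : Type} (T : Topology X).

Notation "g @ x" := (proj1_sig g x) (at level 10).

Definition basic (f : CX T) (xs : list X) (eps : R) : CX T -> Prop :=
  fun h => forall x, In x xs -> Rabs (h @ x - f @ x) < eps.

Lemma basic_open f xs eps : Cp_open T (basic f xs eps).
Proof.
  intros g Hg. unfold basic in Hg.
  assert (He : exists e, e > 0 /\ forall x, In x xs -> Rabs (g @ x - f @ x) + e <= eps).
  { clear -Hg. induction xs as [|a xs IH].
    - exists 1; split; [lra|intros x []].
    - destruct IH as [e [He H]]; [intros x Hx; apply Hg; right; auto|].
      pose proof (Hg a (or_introl eq_refl)).
      exists (Rmin e (eps - Rabs (g @ a - f @ a))). split; [apply Rmin_glb_lt; lra|].
      intros x [<-|Hx].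
      + pose proof (Rmin_r e (eps - Rabs (g @ a - f @ a))). lra.
      + pose proof (Rmin_l e (eps - Rabs (g @ a - f @ a))). pose proof (H x Hx). lra. }
  destruct He as [e [He H]]. exists xs, e. split; auto.
  intros h Hh x Hx. specialize (Hh x Hx). specialize (H x Hx).
  replace (h @ x - f @ x) with ((h @ x - g @ x) + (g @ x - f @ x)) by ring.
  pose proof (Rabs_triang (h @ x - g @ x) (g @ x - f @ x)). lra.
Qed.

Lemma basic_self f xs eps : eps > 0 -> basic f xs eps f.
Proof. intros He x _. rewrite Rminus_diag, Rabs_R0; auto. Qed.

Lemma CX_neq (g f : CX T) : g <> f -> exists x, g @ x <> f @ x.
Proof.
  intros H. apply NNPP; intro Hn. apply H. destruct g as [g Hg], f as [f Hf]. simpl in *.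
  assert (g = f).
  { apply functional_extensionality; intro x. apply NNPP; intro E; apply Hn; eauto. }
  subst g. f_equal. apply proof_irrelevance.
Qed.

Lemma gpt_conv f A : Gamma_pt (Cp T) f A -> forall xs eps, eps > 0 -> almost_all_in A (basic f xs eps).
Proof.
  intros [_ [_ H]] xs eps He. apply H; [apply basic_open|apply basic_self; auto].
Qed.

Lemma extract_pt f A : Gamma_pt (Cp T) f A -> exists g : nat -> CX T,
  (forall k, A (g k)) /\ (forall k, g k <> f) /\
  forall x eps, eps > 0 -> exists K, forall k, (K <= k)%nat -> Rabs (g k @ x - f @ x) < eps.
Proof.
  intros HA. destruct HA as [Hinf [Hnf Hc]].
  destruct (inj_seq _ Hinf) as [g [Hg Hinj]]. exists g. split; auto. split.
  - intros k E. apply Hnf. rewrite <- E; auto.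
  - intros x eps He. destruct (inj_eventually A (basic f (x :: nil) eps) g
       (gpt_conv f A (conj Hinf (conj Hnf Hc)) (x :: nil) eps He) Hg Hinj) as [K HK].
    exists K. intros k Hk. apply (HK k Hk). left; auto.
Qed.

Lemma gamma_out (f : CX T) (b : nat -> list (CX T)) :
  (forall n g, In g (b n) -> g <> f) -> (forall M, exists n, (M <= n)%nat /\ b n <> nil) ->
  (forall x eps, eps > 0 -> exists N, forall n, (N <= n)%nat -> forall g, In g (b n) -> Rabs (g @ x - f @ x) < eps) ->
  Gamma_pt (Cp T) f (fun g => exists n, In g (b n)).
Proof.
  intros Hne Hnn Hc. split; [|split].
  - intro l.
    assert (Hl : exists N, forall n, (N <= n)%nat -> forall g, In g (b n) -> ~ In g l).
    { induction l as [|g0 l [N HN]]; [exists 0%nat; intros n _ g _ []|].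
      destruct (classic (g0 = f)) as [E|E].
      - exists N. intros n Hn g Hg [<-|Hgl]; [apply (Hne n g0); auto| apply (HN n Hn g Hg Hgl)].
      - destruct (CX_neq g0 f E) as [x Hx].
        destruct (Hc x (Rabs (g0 @ x - f @ x))) as [N' HN']; [apply Rabs_pos_lt; lra|].
        exists (Nat.max N N'). intros n Hn g Hg [<-|Hgl].
        + specialize (HN' n ltac:(lia) g0 Hg). lra.
        + apply (HN n ltac:(lia) g Hg Hgl). }
    destruct Hl as [N HN]. destruct (Hnn N) as [n [Hn Hb]].
    destruct (b n) as [|g rest] eqn:Eb; [congruence|].
    exists g. split; [exists n; rewrite Eb; left; auto|]. apply (HN n Hn). rewrite Eb; left; auto.
  - intros [n Hn]. apply (Hne n f Hn); auto.
  - intros W HW Wf. destruct (HW f Wf) as [xs [eps [He HWb]]].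
    destruct (list_eventually xs (fun x n => forall g, In g (b n) -> Rabs (g @ x - f @ x) < eps)) as [N HN].
    { intro x. apply Hc; auto. }
    exists (flat_map b (seq 0 N)). intros g [n Hg] Hn. apply HWb.
    intros x Hx. destruct (Nat.lt_ge_cases n N) as [H|H].
    + exfalso; apply Hn. apply in_flat_map. exists n; split; auto. apply in_seq; lia.
    + apply (HN n H x Hx g Hg).
Qed.

End CpS.

Section CpImpl.
Context {X : Type} (T : Topology X).
Notation "g @ x" := (proj1_sig g x) (at level 10).

Definition zeroC : CX T := exist _ (fun _ => 0) (cont_const T 0).

Lemma neq_open c : R_open (fun r => r <> c).
Proof.
  intros r Hr. exists (Rabs (r - c)). split; [apply Rabs_pos_lt; lra|].
  intros s Hs E. subst s. rewrite Rabs_minus_sym in Hs. lra.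
Qed.

Theorem one_two : (forall f : CX T, Sfin (Gamma_pt (Cp T) f) (Gamma_pt (Cp T) f)) -> Sfin (GammaF T) (GammaO T).
Proof.
  intros H1 s Hs. destruct (extract_all T s Hs) as [u [z [Hs' [Hu [Hz [Hzu [Hne Hg]]]]]]].
  assert (Hh : forall p : nat * nat, exists h : CX T, forall x,
             (z (fst p) (snd p) x -> h @ x = 0) /\ (h @ x = 1 <-> ~ u (fst p) (snd p) x)).
  { intros [n k]. simpl. destruct (urysohn T (z n k) (fun x => ~ u n k x) (Hz n k) (cozero_compl_zero T _ (Hu n k)))
      as [h [Hc Hp]].
    - intros x [A B]; apply B, Hzu; auto.
    - exists (exist _ h Hc). simpl. intro x; split; apply Hp. }
  destruct (choice _ Hh) as [hf Hhf].
  set (hh := fun n k => hf (n, k)).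
  assert (Hhh : forall n k x, (z n k x -> hh n k @ x = 0) /\ (hh n k @ x = 1 <-> ~ u n k x)) by (intros n k; apply (Hhf (n, k))).
  assert (Hpt1 : forall n k, exists x, hh n k @ x = 1).
  { intros n k. destruct (Hne n k) as [x Hx]. exists x. apply Hhh; auto. }
  set (A := fun n g => exists k, hh n k = g).
  assert (HA : forall n, Gamma_pt (Cp T) zeroC (A n)).
  { intro n. split; [|split].
    - intro l.
      assert (Hl : exists K, forall k, (K <= k)%nat -> ~ In (hh n k) l).
      { induction l as [|g0 l [K HK]]; [exists 0%nat; intros k _ []|].
        destruct (classic (exists x, g0 @ x <> 0)) as [[x Hx]|Hno].
        - destruct (Hg n x) as [K' HK']. exists (Nat.max K K'). intros k Hk [E|E].
          + apply Hx. rewrite E. apply Hhh, HK'; lia.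
          + apply (HK k); auto; lia.
        - exists K. intros k Hk [E|E].
          + destruct (Hpt1 n k) as [x Hx]. apply Hno. exists x. rewrite E. lra.
          + apply (HK k); auto. }
      destruct Hl as [K HK]. exists (hh n K). split; [exists K; auto|apply HK; lia].
    - intros [k Hk]. destruct (Hpt1 n k) as [x Hx]. rewrite Hk in Hx. simpl in Hx. lra.
    - intros W HW W0. destruct (HW zeroC W0) as [xs [eps [He HWb]]].
      destruct (list_eventually xs (fun x k => z n k x)) as [K HK]; [apply Hg|].
      exists (map (hh n) (seq 0 K)). intros g [k <-] Hn. apply HWb. intros x Hx.
      destruct (Nat.lt_ge_cases k K) as [H|H].
      + exfalso; apply Hn; apply in_map, in_seq; lia.
      + simpl. rewrite (proj1 (Hhh n k x)) by (apply HK; auto). rewrite Rminus_0_r, Rabs_R0; auto. }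
  destruct (H1 zeroC A HA) as [b [Hb HG]].
  set (G := fun g => exists n, In g (b n)) in HG.
  exists (fun n => map (fun g : CX T => fun x => g @ x <> 1) (b n)). split.
  { intros n e He. apply in_map_iff in He. destruct He as [g [<- Hgb]].
    destruct (Hb n g Hgb) as [k <-].
    replace (fun x => hh n k @ x <> 1) with (u n k); [apply Hs'|].
    apply set_ext. intro x. destruct (Hhh n k x) as [_ E]. split; [intros Hx E'; apply E in E'; auto|].
    intro N; apply NNPP; intro N'; apply N, E; auto. }
  assert (Hne1 : forall g, G g -> exists x, g @ x = 1).
  { intros g [n Hgn]. destruct (Hb n g Hgn) as [k <-]. apply Hpt1. }
  split.
  - apply gamma_from.
    + intros U [n HU]. apply in_map_iff in HU. destruct HU as [g [<- Hgb]].
      destruct (Hne1 g (ex_intro _ n Hgb)) as [x Hx]. exists x; tauto.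
    + intro l.
      assert (Hxs : exists xs : list X, forall V, In V l -> (exists y, ~ V y) -> exists x, In x xs /\ ~ V x).
      { induction l as [|V0 l [xs Hxs]]; [exists nil; intros V []|].
        destruct (classic (exists y, ~ V0 y)) as [[y Hy]|Hn].
        - exists (y :: xs). intros V [<-|HV] Hy'; [exists y; split; [left|]; auto|].
          destruct (Hxs V HV Hy') as [x [Hx1 Hx2]]. exists x; split; [right|]; auto.
        - exists xs. intros V [<-|HV] Hy'; [tauto|auto]. }
      destruct Hxs as [xs Hxs].
      destruct (gpt_conv T zeroC G HG xs 1 ltac:(lra)) as [l' Hl'].
      destruct (proj1 HG l') as [g [[n Hgn] Hgl']].
      assert (Hbas := Hl' g (ex_intro _ n Hgn) Hgl').
      exists (fun x => g @ x <> 1). split.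
      * exists n. apply in_map_iff. exists g; auto.
      * intro Hin. destruct (Hne1 g (ex_intro _ n Hgn)) as [y Hy].
        destruct (Hxs _ Hin) as [x [Hx1 Hx2]]; [exists y; tauto|].
        specialize (Hbas x Hx1). simpl in Hbas. rewrite Rminus_0_r in Hbas.
        apply Hx2. intro E. rewrite E, Rabs_R1 in Hbas. lra.
    + intro x. destruct (gpt_conv T zeroC G HG (x :: nil) 1 ltac:(lra)) as [l Hl].
      exists (map (fun g : CX T => fun x => g @ x <> 1) l).
      intros U [n HU] Hn. apply in_map_iff in HU. destruct HU as [g [<- Hgb]].
      intro E.
      apply Hn. apply (in_map (fun g : CX T => fun x => g @ x <> 1)). apply NNPP; intro Hgl.
      specialize (Hl g (ex_intro _ n Hgb) Hgl x (or_introl eq_refl)). simpl in Hl.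
      rewrite Rminus_0_r, E, Rabs_R1 in Hl. lra.
  - intros U [n HU]. apply in_map_iff in HU. destruct HU as [g [<- Hgb]].
    exact (proj2_sig g _ (neq_open 1)).
Qed.

End CpImpl.

Section CpImpl2.
Context {X : Type} (T : Topology X).
Notation "g @ x" := (proj1_sig g x) (at level 10).

Definition ep (n : nat) : R := / (INR n + 1).
Lemma ep_pos n : ep n > 0.
Proof. unfold ep; apply Rinv_0_lt_compat; pose proof (pos_INR n); lra. Qed.
Lemma ep_mono i j : (i <= j)%nat -> ep j <= ep i.
Proof. intros H. unfold ep. apply Rinv_le_contravar; [pose proof (pos_INR i); lra|]. apply le_INR in H; lra. Qed.
Lemma ep_small eps : eps > 0 -> exists N, forall j, (N <= j)%nat -> ep j < eps.
Proof.
  intros He. destruct (archimed_cor1 eps He) as [N [HN1 HN2]]. exists N. intros j Hj.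
  eapply Rle_lt_trans; [|exact HN1]. unfold ep. apply Rinv_le_contravar; [apply lt_0_INR; lia|].
  apply le_INR in Hj; lra.
Qed.

Lemma cont_of (g : CX T) : continuous T (proj1_sig g).
Proof. exact (proj2_sig g). Qed.

Lemma lt_cozero (D : X -> R) c : continuous T D -> cozero_set T (fun x => D x < c).
Proof.
  intros HD. exists (fun x => Rmax 0 (c - D x)). split.
  - apply (cont_comp1 T (fun x => c - D x) (Rmax 0)); [apply cont_minus; [apply cont_const|auto]|].
    intro x. apply (lipschitz_ed _ 1); [lra|]. intros a b; rewrite Rmult_1_l; apply Rmax0_lip.
  - intro x. unfold Rmax. destruct (Rle_dec 0 (c - D x)); split; intros; lra.
Qed.

Lemma le_zero (D : X -> R) c : continuous T D -> zero_set T (fun x => D x <= c).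
Proof.
  intros HD. exists (fun x => Rmax 0 (D x - c)). split.
  - apply (cont_comp1 T (fun x => D x - c) (Rmax 0)); [apply cont_minus; [auto|apply cont_const]|].
    intro x. apply (lipschitz_ed _ 1); [lra|]. intros a b; rewrite Rmult_1_l; apply Rmax0_lip.
  - intro x. unfold Rmax. destruct (Rle_dec 0 (D x - c)); split; intros; lra.
Qed.

Theorem two_one : Sfin (GammaF T) (GammaO T) -> forall f : CX T, Sfin (Gamma_pt (Cp T) f) (Gamma_pt (Cp T) f).
Proof.
  intros H2 f s Hs.
  assert (Hex : forall n, exists g : nat -> CX T, (forall k, s n (g k)) /\ (forall k, g k <> f) /\
     forall x eps, eps > 0 -> exists K, forall k, (K <= k)%nat -> Rabs (g k @ x - f @ x) < eps).
  { intro n. apply extract_pt; auto. }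
  destruct (choice _ Hex) as [gs Hgs].
  set (D := fun n k x => Rabs (gs n k @ x - f @ x)).
  assert (HD : forall n k, continuous T (D n k)).
  { intros n k. apply cont_abs, cont_minus; apply cont_of. }
  set (Good := fun n => forall M, exists k, (M <= k)%nat /\ forall x, D n k x < ep n).
  destruct (classic (forall M, exists n, (M <= n)%nat /\ ~ Good n)) as [HA|HB].
  -
    destruct (choice _ HA) as [sg Hsg].
    assert (HM : forall n, exists M, ~ Good n -> forall k, (M <= k)%nat -> exists x, ~ D n k x < ep n).
    { intro n. destruct (classic (Good n)) as [G|G]; [exists 0%nat; tauto|].
      apply NNPP; intro Hn. apply G. intro M. apply NNPP; intro Hk. apply Hn. exists M. intros _ k Hk'.
      apply NNPP; intro Hx. apply Hk. exists k. split; auto. intro x. apply NNPP; intro; apply Hx; eauto. }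
    destruct (choice _ HM) as [Mf HMf].
    set (gg := fun j k => gs (sg j) (k + Mf (sg j))%nat).
    set (DD := fun j k x => Rabs (gg j k @ x - f @ x)).
    set (U := fun j k x => DD j k x < ep (sg j)).
    set (Z := fun j k x => DD j k x <= ep (sg j) / 2).
    assert (HDD : forall j k, continuous T (DD j k)) by (intros; apply cont_abs, cont_minus; apply cont_of).
    assert (HU : forall j k, cozero_set T (U j k)) by (intros; apply lt_cozero; auto).
    assert (HZ : forall j k, zero_set T (Z j k)) by (intros; apply le_zero; auto).
    assert (HZU : forall j k x, Z j k x -> U j k x) by (intros j k x; unfold Z, U; pose proof (ep_pos (sg j)); lra).
    assert (Hne : forall j k, exists x, ~ U j k x).
    { intros j k. apply (HMf (sg j)); [apply Hsg|lia]. }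
    assert (Hg : forall j, seqg (Z j)).
    { intros j x. destruct (proj2 (proj2 (Hgs (sg j))) x (ep (sg j) / 2)) as [K HK]; [pose proof (ep_pos (sg j)); lra|].
      exists K. intros k Hk. unfold Z, DD, gg. left. apply HK. lia. }
    destruct (pool (GammaF T) (GammaO T) (inter U) H2 (fun C HC => proj1 HC)
              (GF_ready T U Z HU HZ HZU Hne Hg)) as [m [kk [Hm Hx]]].
    set (G := fun j => gg j (kk j)).
    exists (fun n => map G (filter (fun j => Nat.eqb (sg j) n) (seq 0 (S n)))).
    assert (HinB : forall n g, In g (map G (filter (fun j => Nat.eqb (sg j) n) (seq 0 (S n)))) ->
                   exists j, g = G j /\ sg j = n /\ (j <= n)%nat).
    { intros n g Hg'. apply in_map_iff in Hg'. destruct Hg' as [j [<- Hj]]. apply filter_In in Hj.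
      destruct Hj as [Hj1 Hj2]. apply Nat.eqb_eq in Hj2. apply in_seq in Hj1. exists j; repeat split; auto; lia. }
    split.
    + intros n g Hg'. destruct (HinB n g Hg') as [j [-> [<- _]]]. apply Hgs.
    + apply gamma_out.
      * intros n g Hg'. destruct (HinB n g Hg') as [j [-> _]]. apply Hgs.
      * intro M. exists (sg M). split; [apply Hsg|]. intro E.
        assert (In (G M) (map G (filter (fun j => Nat.eqb (sg j) (sg M)) (seq 0 (S (sg M)))))).
        { apply in_map. apply filter_In. split; [apply in_seq; pose proof (proj1 (Hsg M)); lia|apply Nat.eqb_eq; auto]. }
        rewrite E in H; inversion H.
      * intros x eps He. destruct (Hx x) as [J1 HJ1]. destruct (ep_small eps He) as [J2 HJ2].
        set (J := Nat.max J1 J2).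
        destruct (max_list_bound (map sg (seq 0 J))) as [Nb HNb].
        exists (S Nb). intros n Hn g Hg'. destruct (HinB n g Hg') as [j [-> [Hj1 Hj2]]].
        destruct (Nat.lt_ge_cases j J) as [HjJ|HjJ].
        { exfalso. assert (In (sg j) (map sg (seq 0 J))) by (apply in_map, in_seq; lia).
          specialize (HNb _ H). lia. }
        assert (HU' : U j (kk j) x) by (apply (inter_sub U (m j) (kk j) x j); [apply Hm|apply HJ1; lia]).
        unfold U, DD in HU'. unfold G.
        eapply Rlt_le_trans; [exact HU'|]. left. eapply Rle_lt_trans; [apply ep_mono, (proj1 (Hsg j))|].
        apply HJ2; lia.
  -
    assert (HB' : exists M, forall n, (M <= n)%nat -> Good n).
    { apply NNPP; intro Hn. apply HB. intro M. apply NNPP; intro Hn2. apply Hn. exists M. intros n Hn3.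
      apply NNPP; intro G; apply Hn2; eauto. }
    destruct HB' as [M HM].
    assert (Hk : forall n, exists k, (M <= n)%nat -> forall x, D n k x < ep n).
    { intro n. destruct (le_lt_dec M n) as [H|H].
      - destruct (HM n H 0%nat) as [k [_ Hk]]. exists k; auto.
      - exists 0%nat; intro; lia. }
    destruct (choice _ Hk) as [kf Hkf].
    exists (fun n => if le_lt_dec M n then gs n (kf n) :: nil else nil). split.
    + intros n g. destruct (le_lt_dec M n); [intros [<-|[]]; apply Hgs|intros []].
    + apply gamma_out.
      * intros n g. destruct (le_lt_dec M n); [intros [<-|[]]; apply Hgs|intros []].
      * intro M'. exists (Nat.max M M'). split; [lia|]. destruct (le_lt_dec M (Nat.max M M')); [discriminate|lia].
      * intros x eps He. destruct (ep_small eps He) as [N HN]. exists (Nat.max M N). intros n Hn g.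
        destruct (le_lt_dec M n) as [H|H]; [|lia]. intros [<-|[]].
        eapply Rlt_trans; [apply (Hkf n H x)|]. apply HN; lia.
Qed.

End CpImpl2.


Theorem mainTheorem11 (X : Type) (T : Topology X) (HT : Tychonoff T) :
  ((forall f : CX T, Sfin (Gamma_pt (Cp T) f) (Gamma_pt (Cp T) f))
     <-> Sfin (GammaF T) (GammaO T)) /\
  (Sfin (GammaF T) (GammaO T)
     <-> (Sfin (GammaCl T) (GammaCl T) /\ strongly_zero_dim T)) /\
  ((Sfin (GammaCl T) (GammaCl T) /\ strongly_zero_dim T)
     <-> S1 (GammaF T) (GammaO T)).
Proof.
  split; [split; [apply one_two|apply two_one]|].
  split; split.
  - intro H2. pose proof (two_four T H2) as H4. split; [apply four_cl; auto|apply (four_szd T); auto].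
  - intros [H3 Hs]. apply S1_Sfin_O. apply three_four; auto.
  - intros [H3 Hs]. apply three_four; auto.
  - intro H4. split; [apply four_cl; auto|apply (four_szd T); auto].
Qed.
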